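(* Let $A$ be an $n\times n$ matrix with a designated set of large positions, and let $(X,Y)$ be a $q$-good restriction. Let $X_1,X_2\subseteq X$ and $Y_1,Y_2\subseteq Y$ with $|Y_1|=|X_1|$, $|Y_2|=|X_2|$. Suppose that $(X_1,Y_1)$ has a $p_1$-strong line and $(X_2,Y_2)$ has a $p_2$-strong line, where $(1-p_1)|X_1|>1$, $(1-p_2)|X_2|>1$ and \[(1-p_1)(1-p_2)\frac{|X_1||X_2|}{|X|^2}\ge 4q.\] Then these two strong lines are the same line of $A$: either both are row $i$ for the same $i$, or both are column $j$ for the same $j$.
   Context: Let $A=(a_{ij})_{i,j\in[n]}$ with a designated set $L\subseteq[n]\times[n]$ of large positions. A restriction is $(X,Y)$ with $X,Y\subseteq[n]$, $|X|=|Y|$; a generalized diagonal of $A[X,Y]$ is $\{(i,\sigma(i)):i\in X\}$ for a bijection $\sigma:X\to Y$, random meaning uniform $\sigma$; it is good if it contains exactly one large position; $(X,Y)$ is $q$-good if a random generalized diagonal is good with probability $\ge1-q$. For $i\in X$, row $i$ is $p$-strong for $(X,Y)$ if at least $(1-p)|Y|$ of the positions $\{(i,j):j\in Y\}$ are large; for $j\in Y$, column $j$ is $p$-strong for $(X,Y)$ if at least $(1-p)|X|$ of $\{(i,j):i\in X\}$ are large. $(X,Y)$ has a $p$-strong line if some row or column is $p$-strong for it. *)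

(* Defs.v *)
From HB Require Import structures.
From mathcomp Require Import all_boot all_order all_algebra.
Set Implicit Arguments. Unset Strict Implicit. Unset Printing Implicit Defensive.
Import Order.TTheory GRing.Theory Num.Theory.

(* Bijections sigma : X -> Y, encoded as finite functions on 'I_n that map X
   injectively into Y and are the identity outside X (a canonical normalisation,
   so these are in one-to-one correspondence with the bijections X -> Y when
   #|X| = #|Y|). *)
Definition bij_on (n : nat) (X Y : {set 'I_n}) : {set {ffun 'I_n -> 'I_n}} :=
  [set f : {ffun 'I_n -> 'I_n} |
     [forall i in X, f i \in Y]
     && [forall i in X, forall i' in X, (f i == f i') ==> (i == i')]
     && [forall i, (i \notin X) ==> (f i == i)]].

Definition good_diag (n : nat) (L : {set 'I_n * 'I_n}) (X : {set 'I_n})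
    (f : {ffun 'I_n -> 'I_n}) : bool :=
  #|[set i in X | (i, f i) \in L]| == 1%N.

Definition restriction (n : nat) (X Y : {set 'I_n}) : Prop := #|X| = #|Y|.

Definition q_good (R : realFieldType) (n : nat) (L : {set 'I_n * 'I_n})
    (q : R) (X Y : {set 'I_n}) : Prop :=
  restriction X Y /\
  (#|[set f in bij_on X Y | good_diag L X f]|%:R / #|bij_on X Y|%:R
     >= 1 - q)%R.

Inductive line (n : nat) : Type := Row of 'I_n | Col of 'I_n.

Definition row_strong (R : realFieldType) (n : nat) (L : {set 'I_n * 'I_n})
    (p : R) (X Y : {set 'I_n}) (i : 'I_n) : Prop :=
  i \in X /\ ((1 - p) * #|Y|%:R <= #|[set j in Y | (i, j) \in L]|%:R)%R.

Definition col_strong (R : realFieldType) (n : nat) (L : {set 'I_n * 'I_n})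
    (p : R) (X Y : {set 'I_n}) (j : 'I_n) : Prop :=
  j \in Y /\ ((1 - p) * #|X|%:R <= #|[set i in X | (i, j) \in L]|%:R)%R.

Definition strong_line (R : realFieldType) (n : nat) (L : {set 'I_n * 'I_n})
    (p : R) (X Y : {set 'I_n}) (l : line n) : Prop :=
  match l with
  | Row i => row_strong L p X Y i
  | Col j => col_strong L p X Y j
  end.

(* Main.v *)
Require Import Defs.
From HB Require Import structures.
From mathcomp Require Import all_boot all_order all_algebra all_fingroup.
Import Order.TTheory GRing.Theory Num.Theory.
From mathcomp Require Import ring lra zify.
Set Implicit Arguments. Unset Strict Implicit.

Lemma bij_onP n (X Y : {set 'I_n}) (f : {ffun 'I_n -> 'I_n}) :
  f \in bij_on X Y <->
  [/\ forall i, i \in X -> f i \in Y,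
      forall i i', i \in X -> i' \in X -> f i = f i' -> i = i'
    & forall i, i \notin X -> f i = i].
Proof.
rewrite inE -andbA; split.
  case/and3P=> /forall_inP H1 /forall_inP H2 /forallP H3; split=> //.
    move=> i i' hi hi' e; have /forall_inP := H2 i hi.
    by move=> /(_ i' hi') /implyP /(_ (introT eqP e)) /eqP.
  by move=> i hi; move: (H3 i) => /implyP /(_ hi) /eqP.
case=> H1 H2 H3; apply/and3P; split.
- by apply/forall_inP.
- apply/forall_inP=> i hi; apply/forall_inP=> i' hi'; apply/implyP=> /eqP e.
  by apply/eqP; apply: H2.
- by apply/forallP=> i; apply/implyP=> hi; apply/eqP; apply: H3.
Qed.

Lemma perm_two n (Z : {set 'I_n}) a b a' b' :
  a \in Z -> b \in Z -> a' \in Z -> b' \in Z -> a != b -> a' != b' ->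
  exists g : {perm 'I_n},
    [/\ g a = a', g b = b' & forall z, z \notin Z -> g z = z].
Proof.
move=> aZ bZ a'Z b'Z ab a'b'.
pose c := tperm a a' b.
have cZ : c \in Z by rewrite /c; case: tpermP => _; rewrite ?a'Z ?aZ ?bZ.
have ca' : a' != c.
  by rewrite /c -{1}(tpermL a a') (inj_eq (@perm_inj _ (tperm a a'))).
exists (tperm a a' * tperm b' c)%g; split.
- by rewrite permM tpermL tpermD // eq_sym.
- by rewrite permM tpermR.
- move=> z zZ; rewrite permM.
  have ne : forall w, w \in Z -> (w == z) = false.
    by move=> w wZ; apply/negbTE; apply: contraNneq zZ => <-.
  by rewrite (@tpermD _ a a') ?ne // tpermD ?ne.
Qed.

Lemma perm_fixZ n (Z : {set 'I_n}) (g : {perm 'I_n}) :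
  (forall z, z \notin Z -> g z = z) -> forall z, (g z \in Z) = (z \in Z).
Proof.
move=> H z; case zZ: (z \in Z); last by rewrite H ?zZ.
apply/negP=> gz; have := H _ (introN idP gz); move/perm_inj=> e.
by move: gz; rewrite e zZ.
Qed.

Lemma perm_fixZV n (Z : {set 'I_n}) (g : {perm 'I_n}) :
  (forall z, z \notin Z -> g z = z) -> forall z, z \notin Z -> (g^-1)%g z = z.
Proof.
by move=> H z zZ; apply: (@perm_inj _ g); rewrite permKV H.
Qed.
Definition fib n (X Y : {set 'I_n}) (x1 x2 y1 y2 : 'I_n) :
  {set {ffun 'I_n -> 'I_n}} :=
  [set f in bij_on X Y | (f x1 == y1) && (f x2 == y2)].

Lemma fib_le n (X Y : {set 'I_n}) x1 x2 y1 y2 x1' x2' y1' y2' :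
  x1 \in X -> x2 \in X -> x1' \in X -> x2' \in X -> x1 != x2 -> x1' != x2' ->
  y1 \in Y -> y2 \in Y -> y1' \in Y -> y2' \in Y -> y1 != y2 -> y1' != y2' ->
  #|fib X Y x1 x2 y1 y2| <= #|fib X Y x1' x2' y1' y2'|.
Proof.
move=> x1X x2X x1'X x2'X x12 x12' y1Y y2Y y1'Y y2'Y y12 y12'.
have [g [g1 g2 gX]] := perm_two x1'X x2'X x1X x2X x12' x12.
have [h [h1 h2 hY]] := perm_two y1Y y2Y y1'Y y2'Y y12 y12'.
have gXX := perm_fixZ gX; have hYY := perm_fixZ hY.
pose phi (f : {ffun 'I_n -> 'I_n}) : {ffun 'I_n -> 'I_n} :=
  [ffun i => if i \in X then h (f (g i)) else i].
have -> : #|fib X Y x1 x2 y1 y2| = #|phi @: fib X Y x1 x2 y1 y2|.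
  apply/esym/card_in_imset=> f f' /setIdP [/bij_onP [F1 F2 F3] _]
      /setIdP [/bij_onP [F1' F2' F3'] _] e.
  apply/ffunP=> k; case kX: (k \in X); last by rewrite F3 ?kX // F3' ?kX.
  have kX' : (g^-1)%g k \in X by rewrite -gXX permKV.
  have := congr1 (fun u : {ffun 'I_n -> 'I_n} => u ((g^-1)%g k)) e.
  by rewrite /phi !ffunE kX' permKV => /perm_inj.
apply: subset_leq_card; apply/subsetP=> _ /imsetP [f /setIdP [fB /andP [/eqP e1 /eqP e2]] ->].
move/bij_onP: fB => [F1 F2 F3].
rewrite inE; apply/andP; split.
  apply/bij_onP; split.
  - by move=> i iX; rewrite /phi ffunE iX hYY F1 // gXX.
  - move=> i i' iX i'X; rewrite /phi !ffunE iX i'X => /perm_inj.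
    by move/F2; rewrite !gXX => /(_ iX i'X) /perm_inj.
  - by move=> i iX; rewrite /phi ffunE (negbTE iX).
by rewrite /phi !ffunE x1'X x2'X g1 g2 e1 e2 h1 h2 !eqxx.
Qed.
Lemma fib_eq n (X Y : {set 'I_n}) x1 x2 y1 y2 x1' x2' y1' y2' :
  x1 \in X -> x2 \in X -> x1' \in X -> x2' \in X -> x1 != x2 -> x1' != x2' ->
  y1 \in Y -> y2 \in Y -> y1' \in Y -> y2' \in Y -> y1 != y2 -> y1' != y2' ->
  #|fib X Y x1 x2 y1 y2| = #|fib X Y x1' x2' y1' y2'|.
Proof. by move=> *; apply/eqP; rewrite eqn_leq !fib_le. Qed.

Lemma card_offdiag n (Y : {set 'I_n}) :
  #|setX Y Y :\: [set (y, y) | y in Y]| = #|Y| * #|Y| - #|Y|.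
Proof.
rewrite cardsD cardsX; congr (_ - _).
rewrite (setIidPr _); last first.
  by apply/subsetP=> _ /imsetP [y yY ->]; rewrite inE /= yY.
by rewrite card_imset // => a b [].
Qed.

Lemma card_bij n (X Y : {set 'I_n}) x1 x2 y1 y2 :
  x1 \in X -> x2 \in X -> x1 != x2 -> y1 \in Y -> y2 \in Y -> y1 != y2 ->
  #|bij_on X Y| = (#|Y| * #|Y| - #|Y|) * #|fib X Y x1 x2 y1 y2|.
Proof.
move=> x1X x2X x12 y1Y y2Y y12.
pose D := setX Y Y :\: [set (y, y) | y in Y].
rewrite -card_offdiag -sum1_card.
rewrite (partition_big (fun f : {ffun 'I_n -> 'I_n} => (f x1, f x2))
           (fun p : 'I_n * 'I_n => p \in D)) /=; last first.
  move=> f /bij_onP [F1 F2 F3]; rewrite !inE /= !F1 //= andbT.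
  apply/imsetP=> -[y _ [e1 e2]]; move/negP: x12; apply; apply/eqP.
  by apply: F2 => //; rewrite e1 e2.
rewrite -sum_nat_const; apply: eq_bigr=> p pD.
rewrite sum1dep_card.
have := pD; rewrite !inE => /andP [pnd /andP [p1Y p2Y]].
have p12 : p.1 != p.2.
  by apply: contraNneq pnd => e; apply/imsetP; exists p.1 => //; case: p e {pD} p1Y p2Y => a b /= ->.
rewrite (@fib_eq _ X Y x1 x2 y1 y2 x1 x2 p.1 p.2) //.
Qed.
Lemma count_lb (T K : finType) (S : {set T}) (P : {set K}) (G : K -> {set T})
    (key : T -> K) c :
  (forall p, p \in P -> #|G p| = c) ->
  (forall p f, p \in P -> f \in G p -> f \in S /\ key f = p) ->
  #|P| * c <= #|S|.
Proof.
move=> H1 H2; rewrite -sum_nat_const.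
apply: (@leq_trans (\sum_(p in P) #|[set f in S | key f == p]|)).
  apply: leq_sum => p pP; rewrite -(H1 p pP); apply: subset_leq_card.
  by apply/subsetP => f fG; have [fS e] := H2 p f pP fG; rewrite inE fS e eqxx.
rewrite -[X in _ <= X]sum1_card (partition_big key xpredT) //=.
rewrite big_mkcond /=; apply: leq_sum => p _.
case: (p \in P) => //; by rewrite sum1dep_card.
Qed.
Lemma core (R : realFieldType) n (L : {set 'I_n * 'I_n}) (q : R) (X Y : {set 'I_n})
    (P : {set 'I_n * 'I_n}) (qx1 qx2 qy1 qy2 : 'I_n * 'I_n -> 'I_n)
    (key : {ffun 'I_n -> 'I_n} -> 'I_n * 'I_n) :
  q_good L q X Y -> 1 < #|Y| ->
  (forall p, p \in P -> [/\ qx1 p \in X, qx2 p \in X & qx1 p != qx2 p] /\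
                           [/\ qy1 p \in Y, qy2 p \in Y & qy1 p != qy2 p]) ->
  (forall p f, p \in P -> f \in fib X Y (qx1 p) (qx2 p) (qy1 p) (qy2 p) ->
     ~~ good_diag L X f /\ key f = p) ->
  (1 <= q \/ (#|P|%:R <= q * (#|Y| * #|Y| - #|Y|)%:R))%R.
Proof.
move=> [eXY hq] Y2 HP Hf.
have X2 : 1 < #|X| by rewrite eXY.
have [x1 [x2 [x1X x2X x12]]] := card_gt1P X2.
have [y1 [y2 [y1Y y2Y y12]]] := card_gt1P Y2.
set c := #|fib X Y x1 x2 y1 y2|.
set d := #|Y| * #|Y| - #|Y|.
set B := bij_on X Y.
set S := [set f in B | ~~ good_diag L X f].
set G := [set f in B | good_diag L X f].
have hB : #|B| = d * c by rewrite /B (card_bij x1X x2X x12 y1Y y2Y y12).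
have hGS : #|G| + #|S| = #|B|.
  rewrite -(cardsID [set f | good_diag L X f] B).
  have -> : G = B :&: [set f | good_diag L X f] by apply/setP=> f; rewrite !inE.
  have -> : S = B :\: [set f | good_diag L X f] by apply/setP=> f; rewrite !inE andbC.
  by [].
have hPS : #|P| * c <= #|S|.
  apply: (@count_lb _ _ S P (fun p => fib X Y (qx1 p) (qx2 p) (qy1 p) (qy2 p)) key c).
    move=> p pP; have [[? ? ?] [? ? ?]] := HP p pP.
    by rewrite /c (@fib_eq _ X Y (qx1 p) (qx2 p) (qy1 p) (qy2 p) x1 x2 y1 y2).
  move=> p f pP fG; have [ng kf] := Hf p f pP fG; split => //.
  by move: fG; rewrite !inE => /andP [fB _]; rewrite fB.
have d0 : 0 < d by rewrite /d; move: Y2; case: #|Y| => [|[|k]] //= _; rewrite ltn_subRL; nia.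
case: (posnP c) => [c0|cpos].
  left; move: hq; rewrite -/B -/G.
  have -> : #|B| = 0 by rewrite hB c0 muln0.
  by rewrite invr0 mulr0 subr_le0.
right.
have Bpos : (0 < #|B|%:R :> R)%R by rewrite ltr0n hB muln_gt0 d0.
move: hq; rewrite -/B -/G ler_pdivlMr // => hq.
have e1 : (#|G|%:R + #|S|%:R = #|B|%:R :> R)%R by rewrite -natrD hGS.
have e2 : (#|P|%:R * c%:R <= #|S|%:R :> R)%R by rewrite -natrM ler_nat.
have e3 : (#|B|%:R = d%:R * c%:R :> R)%R by rewrite hB natrM.
have cR : (0 < c%:R :> R)%R by rewrite ltr0n.
have : (#|P|%:R * c%:R <= (q * d%:R) * c%:R :> R)%R.
  apply: (le_trans e2); rewrite -mulrA -e3; lra.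
by rewrite ler_pM2r.
Qed.
Lemma final (R : realFieldType) (q p1 p2 : R) (x1 x2 m s t P : nat) :
  (1 < (1 - p1) * x1%:R)%R -> (1 < (1 - p2) * x2%:R)%R ->
  ((1 - p1) * x1%:R <= s%:R)%R -> ((1 - p2) * x2%:R <= t%:R)%R ->
  s <= m -> t <= m ->
  (4 * q <= (1 - p1) * (1 - p2) * ((x1 * x2)%:R / (m%:R ^+ 2)))%R ->
  (1 <= q \/ P%:R <= q * (m * m - m)%:R)%R -> s * t <= 4 * P -> False.
Proof.
move=> ha hb hs ht sm tm hq hP hst.
set a := ((1 - p1) * x1%:R)%R in ha hs; set b := ((1 - p2) * x2%:R)%R in hb ht.
have s1 : (1 < s%:R :> R)%R by apply: lt_le_trans hs.
have t1 : (1 < t%:R :> R)%R by apply: lt_le_trans ht.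
have mR : (s%:R <= m%:R :> R)%R by rewrite ler_nat.
have mR' : (t%:R <= m%:R :> R)%R by rewrite ler_nat.
have m0 : (0 < m%:R :> R)%R by lra.
have hq' : (4 * q * m%:R ^+ 2 <= a * b)%R.
  rewrite -ler_pdivlMr ?exprn_gt0 //; apply: (le_trans hq).
  by rewrite /a /b natrM le_eqVlt; apply/orP; left; apply/eqP; ring.
have hab : (a * b <= s%:R * t%:R)%R.
  by apply: ler_pM => //; lra.
have hst' : (s%:R * t%:R <= 4 * P%:R :> R)%R.
  by rewrite -natrM -(natrM R 4) ler_nat.
case: hP => hP.
  have : (4 * m%:R ^+ 2 <= m%:R ^+ 2 :> R)%R.
    apply: le_trans (_ : 4 * q * m%:R ^+ 2 <= _)%R.
      by rewrite ler_pM2r ?exprn_gt0 //; lra.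
    apply: (le_trans hq'); apply: (le_trans hab); rewrite expr2.
    by apply: ler_pM => //; lra.
  have : (0 < m%:R ^+ 2 :> R)%R by rewrite exprn_gt0.
  lra.
have mm : m <= m * m by rewrite leq_pmull // -(ltr0n R).
move: hP; rewrite natrB // natrM => hP.
nra.
Qed.
Lemma notgood n (L : {set 'I_n * 'I_n}) (X : {set 'I_n}) (f : {ffun 'I_n -> 'I_n}) i1 i2 :
  i1 \in X -> i2 \in X -> i1 != i2 -> (i1, f i1) \in L -> (i2, f i2) \in L ->
  ~~ good_diag L X f.
Proof.
move=> i1X i2X i12 l1 l2; rewrite /good_diag.
have : 2 <= #|[set i in X | (i, f i) \in L]|.
  have := cards2 i1 i2; rewrite i12 => <-; apply: subset_leq_card; apply/subsetP=> k.
  by rewrite !inE => /orP [] /eqP ->; rewrite ?i1X ?i2X.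
by case: #|_| => [|[|]].
Qed.

Lemma fibE n (X Y : {set 'I_n}) x1 x2 y1 y2 f :
  f \in fib X Y x1 x2 y1 y2 -> [/\ f \in bij_on X Y, f x1 = y1 & f x2 = y2].
Proof. by rewrite inE => /andP [fB /andP [/eqP -> /eqP ->]]. Qed.

Lemma caseRR (R : realFieldType) n (L : {set 'I_n * 'I_n}) (q : R) (X Y : {set 'I_n})
    i1 i2 (S1 S2 : {set 'I_n}) :
  q_good L q X Y -> i1 \in X -> i2 \in X -> i1 != i2 ->
  S1 \subset Y -> S2 \subset Y ->
  (forall y, y \in S1 -> (i1, y) \in L) -> (forall y, y \in S2 -> (i2, y) \in L) ->
  1 < #|S1| -> 1 < #|S2| ->
  exists Pn, #|S1| * #|S2| <= 4 * Pn /\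
    (1 <= q \/ (Pn%:R <= q * (#|Y| * #|Y| - #|Y|)%:R))%R.
Proof.
move=> hq i1X i2X i12 sS1 sS2 L1 L2 s2 t2.
pose P := setX S1 S2 :\: [set (y, y) | y in S1].
exists #|P|; split.
  have : #|S1| * #|S2| - #|S1| <= #|P|.
    rewrite /P cardsD cardsX leq_sub2l //.
    apply: (leq_trans (subset_leq_card (subsetIr _ _))).
    by rewrite card_imset // => a b [].
  nia.
have Y2 : 1 < #|Y| by apply: leq_trans s2 (subset_leq_card sS1).
apply: (@core R n L q X Y P (fun _ => i1) (fun _ => i2) fst snd
   (fun f => (f i1, f i2)) hq Y2).
  move=> [a b]; rewrite !inE /= => /andP [nd /andP [aS bS]].
  have aY : a \in Y by apply: (subsetP sS1).
  have bY : b \in Y by apply: (subsetP sS2).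
  split; split=> //=.
  by apply/negP => /eqP e; move/negP: nd; apply; apply/imsetP; exists a; rewrite // -e.
move=> [a b] f pP /fibE [fB e1 e2]; move: pP; rewrite !inE /= => /andP [nd /andP [aS bS]].
split; last by rewrite e1 e2.
by apply: (notgood i1X i2X i12); rewrite ?e1 ?e2; [apply: L1 | apply: L2].
Qed.
Lemma pick_inv n (X Y : {set 'I_n}) (f : {ffun 'I_n -> 'I_n}) x y d :
  f \in bij_on X Y -> x \in X -> f x = y -> odflt d [pick z in X | f z == y] = x.
Proof.
move=> /bij_onP [F1 F2 F3] xX fx; case: pickP => [z /andP [zX /eqP fz] | H] /=.
  by apply: F2 => //; rewrite fz fx.
by move: (H x); rewrite xX fx eqxx.
Qed.

Lemma caseCC (R : realFieldType) n (L : {set 'I_n * 'I_n}) (q : R) (X Y : {set 'I_n})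
    j1 j2 (T1 T2 : {set 'I_n}) :
  q_good L q X Y -> j1 \in Y -> j2 \in Y -> j1 != j2 ->
  T1 \subset X -> T2 \subset X ->
  (forall x, x \in T1 -> (x, j1) \in L) -> (forall x, x \in T2 -> (x, j2) \in L) ->
  1 < #|T1| -> 1 < #|T2| ->
  exists Pn, #|T1| * #|T2| <= 4 * Pn /\
    (1 <= q \/ (Pn%:R <= q * (#|Y| * #|Y| - #|Y|)%:R))%R.
Proof.
move=> hq j1Y j2Y j12 sT1 sT2 L1 L2 s2 t2.
pose P := setX T1 T2 :\: [set (y, y) | y in T1].
exists #|P|; split.
  have : #|T1| * #|T2| - #|T1| <= #|P|.
    rewrite /P cardsD cardsX leq_sub2l //.
    apply: (leq_trans (subset_leq_card (subsetIr _ _))).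
    by rewrite card_imset // => a b [].
  nia.
have Y2 : 1 < #|Y|.
  by rewrite -(proj1 hq); apply: leq_trans s2 (subset_leq_card sT1).
apply: (@core R n L q X Y P fst snd (fun _ => j1) (fun _ => j2)
   (fun f => (odflt j1 [pick z in X | f z == j1], odflt j1 [pick z in X | f z == j2])) hq Y2).
  move=> [a b]; rewrite !inE /= => /andP [nd /andP [aS bS]].
  have aY : a \in X by apply: (subsetP sT1).
  have bY : b \in X by apply: (subsetP sT2).
  split; split=> //=.
  by apply/negP => /eqP e; move/negP: nd; apply; apply/imsetP; exists a; rewrite // -e.
move=> [a b] f pP /fibE [fB e1 e2]; move: pP; rewrite !inE /= => /andP [nd /andP [aS bS]].
have aY : a \in X by apply: (subsetP sT1).
have bY : b \in X by apply: (subsetP sT2).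
have ab : a != b.
  by apply/negP => /eqP e; move/negP: nd; apply; apply/imsetP; exists a; rewrite // -e.
split; last by rewrite (pick_inv _ fB aY e1) (pick_inv _ fB bY e2).
by apply: (notgood aY bY ab); rewrite ?e1 ?e2; [apply: L1 | apply: L2].
Qed.

Lemma caseRC (R : realFieldType) n (L : {set 'I_n * 'I_n}) (q : R) (X Y : {set 'I_n})
    i j (S T : {set 'I_n}) :
  q_good L q X Y -> i \in X -> j \in Y ->
  S \subset Y -> T \subset X ->
  (forall y, y \in S -> (i, y) \in L) -> (forall x, x \in T -> (x, j) \in L) ->
  1 < #|S| -> 1 < #|T| ->
  exists Pn, #|S| * #|T| <= 4 * Pn /\
    (1 <= q \/ (Pn%:R <= q * (#|Y| * #|Y| - #|Y|)%:R))%R.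
Proof.
move=> hq iX jY sS sT LS LT s2 t2.
pose P := setX (S :\ j) (T :\ i).
exists #|P|; split.
  rewrite /P cardsX.
  move: s2 t2; rewrite (cardsD1 j S) (cardsD1 i T).
  move: #|S :\ j| #|T :\ i| => a b.
  case: (j \in S); case: (i \in T) => /= ha hb; nia.
have Y2 : 1 < #|Y| by apply: leq_trans s2 (subset_leq_card sS).
apply: (@core R n L q X Y P (fun _ => i) snd fst (fun _ => j)
   (fun f => (f i, odflt i [pick z in X | f z == j])) hq Y2).
  move=> [a b]; rewrite !inE /= => /andP [/andP [aj aS] /andP [bi bT]].
  have aY : a \in Y by apply: (subsetP sS).
  have bY : b \in X by apply: (subsetP sT).
  by split; split=> //=; rewrite eq_sym.
move=> [a b] f pP /fibE [fB e1 e2]; move: pP; rewrite !inE /= => /andP [/andP [aj aS] /andP [bi bT]].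
have bY : b \in X by apply: (subsetP sT).
split; last by rewrite e1 (pick_inv _ fB bY e2).
by apply: (notgood iX bY _); rewrite ?e1 ?e2 1?eq_sym //; [apply: LS | apply: LT].
Qed.
Lemma gt1 (R : realFieldType) (x : R) k : (1 < x)%R -> (x <= k%:R)%R -> 1 < k.
Proof. by move=> a b; rewrite -(ltr_nat R) mulr1n; apply: lt_le_trans a b. Qed.

Theorem lemma2p12 (R : realFieldType) (n : nat) (L : {set 'I_n * 'I_n})
    (q p1 p2 : R) (X Y X1 Y1 X2 Y2 : {set 'I_n}) (l1 l2 : line n) :
  q_good L q X Y ->
  X1 \subset X -> X2 \subset X -> Y1 \subset Y -> Y2 \subset Y ->
  #|Y1| = #|X1| -> #|Y2| = #|X2| ->
  strong_line L p1 X1 Y1 l1 ->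
  strong_line L p2 X2 Y2 l2 ->
  (1 < (1 - p1) * #|X1|%:R)%R ->
  (1 < (1 - p2) * #|X2|%:R)%R ->
  (4 * q <= (1 - p1) * (1 - p2) * ((#|X1| * #|X2|)%:R / (#|X|%:R ^+ 2)))%R ->
  l1 = l2.
Proof.
move=> hq sX1 sX2 sY1 sY2 eY1 eY2 st1 st2 h1 h2 h4.
have eXY := proj1 hq.
case: l1 st1 => [i1|j1] [m1 c1]; case: l2 st2 => [i2|j2] [m2 c2].
- case: (eqVneq i1 i2) => [-> //|i12]; exfalso.
  rewrite eY1 in c1; rewrite eY2 in c2.
  set S1 := [set j in Y1 | (i1, j) \in L] in c1.
  set S2 := [set j in Y2 | (i2, j) \in L] in c2.
  have sS1 : S1 \subset Y by apply: subset_trans sY1; apply/subsetP=> y; rewrite inE => /andP [].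
  have sS2 : S2 \subset Y by apply: subset_trans sY2; apply/subsetP=> y; rewrite inE => /andP [].
  have [Pn [hst hP]] := caseRR hq (subsetP sX1 _ m1) (subsetP sX2 _ m2) i12 sS1 sS2
     (fun y => ltac:(by rewrite inE => /andP [])) (fun y => ltac:(by rewrite inE => /andP []))
     (gt1 h1 c1) (gt1 h2 c2).
  rewrite -eXY in hP.
  apply: (final h1 h2 c1 c2 _ _ h4 hP hst); rewrite eXY; exact: subset_leq_card.
- exfalso; rewrite eY1 in c1.
  set S := [set j in Y1 | (i1, j) \in L] in c1.
  set T := [set i in X2 | (i, j2) \in L] in c2.
  have sS : S \subset Y by apply: subset_trans sY1; apply/subsetP=> y; rewrite inE => /andP [].
  have sT : T \subset X by apply: subset_trans sX2; apply/subsetP=> y; rewrite inE => /andP [].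
  have [Pn [hst hP]] := caseRC hq (subsetP sX1 _ m1) (subsetP sY2 _ m2) sS sT
     (fun y => ltac:(by rewrite inE => /andP [])) (fun y => ltac:(by rewrite inE => /andP []))
     (gt1 h1 c1) (gt1 h2 c2).
  rewrite -eXY in hP.
  apply: (final h1 h2 c1 c2 _ _ h4 hP hst); [rewrite eXY|]; exact: subset_leq_card.
- exfalso; rewrite eY2 in c2.
  set T := [set i in X1 | (i, j1) \in L] in c1.
  set S := [set j in Y2 | (i2, j) \in L] in c2.
  have sS : S \subset Y by apply: subset_trans sY2; apply/subsetP=> y; rewrite inE => /andP [].
  have sT : T \subset X by apply: subset_trans sX1; apply/subsetP=> y; rewrite inE => /andP [].
  have [Pn [hst hP]] := caseRC hq (subsetP sX2 _ m2) (subsetP sY1 _ m1) sS sT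
     (fun y => ltac:(by rewrite inE => /andP [])) (fun y => ltac:(by rewrite inE => /andP []))
     (gt1 h2 c2) (gt1 h1 c1).
  rewrite -eXY in hP; rewrite mulnC in hst.
  apply: (final h1 h2 c1 c2 _ _ h4 hP hst); [|rewrite eXY]; exact: subset_leq_card.
- case: (eqVneq j1 j2) => [-> //|j12]; exfalso.
  set T1 := [set i in X1 | (i, j1) \in L] in c1.
  set T2 := [set i in X2 | (i, j2) \in L] in c2.
  have sT1 : T1 \subset X by apply: subset_trans sX1; apply/subsetP=> y; rewrite inE => /andP [].
  have sT2 : T2 \subset X by apply: subset_trans sX2; apply/subsetP=> y; rewrite inE => /andP [].
  have [Pn [hst hP]] := caseCC hq (subsetP sY1 _ m1) (subsetP sY2 _ m2) j12 sT1 sT2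
     (fun y => ltac:(by rewrite inE => /andP [])) (fun y => ltac:(by rewrite inE => /andP []))
     (gt1 h1 c1) (gt1 h2 c2).
  rewrite -eXY in hP.
  apply: (final h1 h2 c1 c2 _ _ h4 hP hst); exact: subset_leq_card.
Qed.
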